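(* Fix $P_{\max}>0$. For thresholds $(Q,P_{\rm avg})$ let (P2)$_{Q,P_{\rm avg}}$ denote problem (P2). Let $(Q_x,\bar P_x)$, $(Q_y,\bar P_y)$ be threshold pairs and suppose $(P^*_x,\rho^*_x)$ and $(P^*_y,\rho^*_y)$ are optimal policy pairs for (P2)$_{Q_x,\bar P_x}$ and (P2)$_{Q_y,\bar P_y}$. Then for every $\theta\in[0,1]$ there is a policy pair $(P_z,\rho_z)$ with $0\le P_{z,\nu}\le P_{\max}$, $0\le\rho_{z,\nu}\le1$, such that $\mathbb{E}[Q^{\rm NL}_\nu(P_{z,\nu},\rho_{z,\nu})]\ge\theta Q_x+(1-\theta)Q_y$, $\mathbb{E}[P_{z,\nu}]\le\theta\bar P_x+(1-\theta)\bar P_y$, and $\mathbb{E}[R_\nu(P_{z,\nu},\rho_{z,\nu})]\ge\theta\,\mathbb{E}[R_\nu(P^*_{x,\nu},\rho^*_{x,\nu})]+(1-\theta)\,\mathbb{E}[R_\nu(P^*_{y,\nu},\rho^*_{y,\nu})]$. (That is, (P2) satisfies the time-sharing condition.)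
   Context: Standing model: constants $a,b,P_s,T,\sigma^2>0$ are fixed and $\Omega=1/(1+e^{ab})$. Fading is modeled on a probability space carrying independent random variables $h$ (channel power gain, values in $(0,\infty)$, $\mathbb{E}[h]<\infty$) and $U$ (uniform on $[0,1]$). A fading state is $\nu=(h_\nu,U_\nu)$, distributed as $(h,U)$; $\mathbb{E}$ is expectation over the fading state. A policy is a Borel measurable function of the fading state. For a fading state with gain $h_\nu$, transmit power $p\ge0$ and power-splitting ratio $\rho\in[0,1]$: $R_\nu(p,\rho)=\ln\big(1+(1-\rho)h_\nu p/\sigma^2\big)$ (rate, in nats); $\Psi_\nu(p,\rho)=1/(1+e^{-a(\rho h_\nu p-b)})$; $Q^{\rm NL}_\nu(p,\rho)=P_sT(\Psi_\nu(p,\rho)-\Omega)/(1-\Omega)$ (harvested energy). Problem (P2) (short-term power limit $P_{\max}$, average power limit $P_{\rm avg}$, energy threshold $Q$): maximize $\mathbb{E}[R_\nu(P_\nu,\rho_\nu)]$ over pairs of policies $(P_\nu,\rho_\nu)$ with $0\le P_\nu\le P_{\max}$, $0\le\rho_\nu\le1$, subject to $\mathbb{E}[Q^{\rm NL}_\nu(P_\nu,\rho_\nu)]\ge Q$ and $\mathbb{E}[P_\nu]\le P_{\rm avg}$. *)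

(* Defs.v *)
From HB Require Import structures.
From mathcomp Require Import all_boot all_order all_algebra.
From mathcomp Require Import all_classical all_reals all_analysis.
Set Implicit Arguments. Unset Strict Implicit. Unset Printing Implicit Defensive.
Import Order.TTheory GRing.Theory Num.Theory.
Local Open Scope classical_set_scope.
Local Open Scope ring_scope.

Definition Omg {R : realType} (a b : R) : R := 1 / (1 + expR (a * b)).

Definition rate {R : realType} (sigma2 h p rho : R) : R :=
  ln (1 + (1 - rho) * h * p / sigma2).

Definition Psi {R : realType} (a b h p rho : R) : R :=
  1 / (1 + expR (- (a * (rho * h * p - b)))).

Definition QNL {R : realType} (a b Ps T h p rho : R) : R :=
  Ps * T * (Psi a b h p rho - Omg a b) / (1 - Omg a b).

(* A policy is a Borel measurable function of the fading state (h,U) in R*R. *)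
Definition policy {R : realType} (f : R * R -> R) : Prop :=
  measurable_fun setT f.

Section Fading.
Context {d : measure_display} {Om : measurableType d} {R : realType}
  (P : probability Om R) (h U : Om -> R).

Definition fstate (w : Om) : R * R := (h w, U w).

Definition Erate (sigma2 : R) (Pf rhof : R * R -> R) : \bar R :=
  'E_P[fun w => rate sigma2 (h w) (Pf (fstate w)) (rhof (fstate w))].
Definition Eenergy (a b Ps T : R) (Pf rhof : R * R -> R) : \bar R :=
  'E_P[fun w => QNL a b Ps T (h w) (Pf (fstate w)) (rhof (fstate w))].
Definition Epower (Pf : R * R -> R) : \bar R :=
  'E_P[fun w => Pf (fstate w)].

Definition P2_feasible (a b Ps T Pmax Q Pavg : R) (Pf rhof : R * R -> R) : Prop :=
  [/\ policy Pf /\ policy rhof,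
      (forall x, 0 <= Pf x <= Pmax), (forall x, 0 <= rhof x <= 1),
      (Eenergy a b Ps T Pf rhof >= Q%:E)%E & (Epower Pf <= Pavg%:E)%E].

Definition P2_optimal (a b Ps T sigma2 Pmax Q Pavg : R) (Pf rhof : R * R -> R) : Prop :=
  P2_feasible a b Ps T Pmax Q Pavg Pf rhof /\
  forall Pf' rhof', P2_feasible a b Ps T Pmax Q Pavg Pf' rhof' ->
    (Erate sigma2 Pf' rhof' <= Erate sigma2 Pf rhof)%E.
End Fading.

Definition fading_model {d : measure_display} {Om : measurableType d} {R : realType}
  (P : probability Om R) (h U : Om -> R) : Prop :=
  [/\ measurable_fun setT h /\ measurable_fun setT U,
      (forall w, 0 < h w),
      ('E_P[h] < +oo)%E,
      (forall B : set R, measurable B ->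
         P (U @^-1` B) = (@lebesgue_measure R) (B `&` `[0, 1]))
    & (forall A B : set R, measurable A -> measurable B ->
         P (h @^-1` A `&` U @^-1` B) = (P (h @^-1` A) * P (U @^-1` B))%E)].

(* Main.v *)
Require Import Defs.
From HB Require Import structures.
From mathcomp Require Import all_boot all_order all_algebra.
From mathcomp Require Import all_classical all_reals all_analysis measurable_realfun.
From mathcomp Require Import ring lra.
Set Implicit Arguments. Unset Strict Implicit. Unset Printing Implicit Defensive.
Import Order.TTheory GRing.Theory Num.Theory.
Import numFieldNormedType.Exports.
Local Open Scope classical_set_scope.
Local Open Scope ring_scope.
Notation PF := measure_function_pushforward__canonical__measure_function_Measure.
Lemma leb_affine (R : realType) (al c : R) (c0 : 0 < c) (C : set R) : measurable C ->
  (@lebesgue_measure R) ((fun u => (u - al) / c) @^-1` C) = (c%:E * lebesgue_measure C)%E.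
Proof.
move=> mC.
pose phi := (fun u : R => (u - al) / c) : measurableTypeR R -> measurableTypeR R.
have mphi : measurable_fun [set: measurableTypeR R] phi.
  by apply: measurable_funM => //; apply: measurable_funB.
have ic0 : 0 <= c^-1 by rewrite invr_ge0 ltW.
pose nu := mscale (NngNum ic0) (PF (@lebesgue_measure R) mphi).
have := @lebesgue_measure_unique R nu _ C mC.
rewrite /nu /mscale /= => ->.
  by rewrite /pushforward muleA -EFinM mulfV ?gt_eqF // mul1e.
move=> _ [[x y] _ <-]; rewrite /mscale /= /pushforward.
have -> : phi @^-1` `]x, y] = `](x * c + al), (y * c + al)]%classic.
  apply/seteqP; split => u /=; rewrite !in_itv /= /phi ltr_pdivlMr // ler_pdivrMr //.
    by case/andP => h1 h2; apply/andP; split; lra.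
  by case/andP => h1 h2; apply/andP; split; lra.
rewrite (lebesgue_measure_itv `]x, y]) (lebesgue_measure_itv `](x * c + al), (y * c + al)]) /= !lte_fin.
rewrite ltrD2r ltr_pM2r //.
case: ifPn => // _.
by rewrite -!EFinB -EFinM; congr (_%:E); field; rewrite gt_eqF.
by rewrite mule0.
Qed.
Notation MR := measure_function_mrestr__canonical__measure_function_Measure.

Section core.
Context (d : measure_display) (Om : measurableType d) (R : realType)
  (P : probability Om R) (h U : Om -> R).
Hypothesis hmodel : fading_model P h U.
Context (I : set R) (mI : measurable I) (al c : R) (c0 : 0 < c).
Let phi := fun u : R => (u - al) / c.
Hypothesis Hleb : forall C : set R, measurable C ->
  (@lebesgue_measure R) ((I `&` phi @^-1` C) `&` `[0%R, 1%R]) =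
  (c%:E * (@lebesgue_measure R) (C `&` `[0%R, 1%R]))%E.

Let mh : measurable_fun setT h. Proof. by case: hmodel => -[]. Qed.
Let mU : measurable_fun setT U. Proof. by case: hmodel => -[]. Qed.
Let mphi : measurable_fun [set: R] phi.
Proof. by apply: measurable_funM => //; apply: measurable_funB. Qed.
Let Phi := fun s : R * R => (s.1, phi s.2).
Let mfs : measurable_fun setT (fstate h U).
Proof. exact: measurable_fun_pair. Qed.
Let mPf : measurable_fun setT (Phi \o fstate h U).
Proof.
apply: measurable_fun_pair => //=.
exact: measurableT_comp.
Qed.
Let D := U @^-1` I.
Let mD : measurable D.
Proof. by rewrite -[D]setTI; exact: mU. Qed.
Let c0' : 0 <= c. Proof. exact: ltW. Qed.

Lemma core_measure (A : set (R * R)) : measurable A ->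
  PF (MR P mD) mPf A = mscale (NngNum c0') (PF P mfs) A.
Proof.
move=> mA.
apply: (measure_unique [set A `*` B | A in measurable & B in measurable]
   (fun=> setT)) => //.
- exact: measurable_prod_measurableType.
- move=> _ _ [A1 mA1 [B1 mB1 <-]] [A2 mA2 [B2 mB2 <-]].
  by rewrite -setXI; exists (A1 `&` A2); [exact: measurableI|exists (B1 `&` B2) => //; exact: measurableI].
- by move=> _; exists setT => //; exists setT => //; rewrite setXTT.
- by rewrite bigcup_const //; exists 0%N.
- move=> _ [A1 mA1 [B1 mB1 <-]].
  rewrite /= /pushforward /mrestr /mscale /=.
  have [_ _ _ hunif hind] := hmodel.
  have mpB : measurable (phi @^-1` B1).
    by rewrite -[_ @^-1` _]setTI; exact: mphi.
  have -> : (Phi \o fstate h U) @^-1` (A1 `*` B1) `&` D =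
      h @^-1` A1 `&` U @^-1` (I `&` phi @^-1` B1).
    apply/seteqP; split => w /=; rewrite /D /fstate /=; tauto.
  have -> : pushforward P (fstate h U) (A1 `*` B1) = P (h @^-1` A1 `&` U @^-1` B1).
    by [].
  rewrite !hind //; last exact: measurableI.
  by rewrite !hunif //; [rewrite Hleb // muleCA | exact: measurableI].
- move=> _; rewrite /= /pushforward /mrestr.
  apply: (le_lt_trans (probability_le1 P _)); last by rewrite ltry.
  by rewrite preimage_setT setTI.
Qed.

Lemma core_integral (G : R * R -> R) (mG : measurable_fun setT G)
  (G0 : forall s, 0 <= G s) :
  (\int[P]_(w in D) (G (Phi (fstate h U w)))%:E =
   c%:E * \int[P]_w (G (fstate h U w))%:E)%E.
Proof.
have mGE : measurable_fun setT (fun s => (G s)%:E) by exact/measurable_EFinP.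
have -> : (\int[P]_w (G (fstate h U w))%:E =
    \int[PF P mfs]_y (G y)%:E)%E.
  rewrite (ge0_integral_pushforward mfs) //=.
  by move=> y _; rewrite lee_fin.
have -> : (c%:E * \int[PF P mfs]_y (G y)%:E =
    \int[mscale (NngNum c0') (PF P mfs)]_y (G y)%:E)%E.
  by rewrite ge0_integral_mscale //= => y _; rewrite lee_fin.
rewrite (eq_measure_integral (PF (MR P mD) mPf)); last first.
  by move=> A mA _; rewrite core_measure.
rewrite (ge0_integral_pushforward mPf) //=; last by move=> y _; rewrite lee_fin.
rewrite preimage_setT.
rewrite (@ge0_negligible_integral _ _ _ (MR P mD) setT (~` D)) //; last 4 first.
- exact: measurableC.
- by apply/measurable_EFinP; exact: (measurableT_comp mG mPf).
- by move=> y _; rewrite lee_fin.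
- by rewrite /= /mrestr setICl measure0.
rewrite setTD setCK.
apply: eq_measure_integral => A mA AD.
by rewrite /= /mrestr setIidl.
Qed.
End core.
Lemma leb_oc01 (R : realType) (C : set R) : measurable C ->
  (@lebesgue_measure R) (C `&` `]0%R, 1%R]) = (@lebesgue_measure R) (C `&` `[0%R, 1%R]).
Proof.
move=> mC.
have -> : C `&` `[0%R, 1%R] = (C `&` `]0%R, 1%R]) `|` (C `&` [set 0%R]).
  apply/seteqP; split => u /=; rewrite !in_itv /=.
    move=> [Cu /andP[u0 u1]]; have [ue|un0] := eqVneq u 0%R; [by right; rewrite -ue|left].
    by split => //; rewrite u1 andbT lt_neqAle eq_sym un0.
  move=> [[Cu /andP[u0 u1]]|[Cu ue]]; split => //; first by rewrite (ltW u0) u1.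
  by rewrite ue lexx ler01.
rewrite measureU0 //; first exact: measurableI.
  exact: measurableI.
apply: (@subset_measure0 _ _ _ lebesgue_measure (C `&` [set 0%R]) [set 0%R]).
- exact: measurableI.
- by [].
- exact: subIsetr.
- exact: lebesgue_measure_set1.
Qed.

Lemma piece1 (R : realType) (t : R) (t0 : 0 < t) (t1 : t <= 1) (C : set R) : measurable C ->
  (@lebesgue_measure R) ((`]-oo, t] `&` (fun u => (u - 0) / t) @^-1` C) `&` `[0%R, 1%R]) =
  (t%:E * (@lebesgue_measure R) (C `&` `[0%R, 1%R]))%E.
Proof.
move=> mC; rewrite -(@leb_affine R 0 t t0) //; last exact: measurableI.
congr (lebesgue_measure _); apply/seteqP; split => u /=; rewrite !in_itv /= subr0.
  move=> [[ut Cu] /andP[u0 u1]]; split => //.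
  by rewrite divr_ge0 ?(ltW t0) //= ler_pdivrMr // mul1r.
move=> [Cu /andP[u0 u1]].
rewrite ler_pdivrMr // mul1r in u1.
have u0' : 0 <= u by have := mulr_ge0 u0 (ltW t0); rewrite divfK ?gt_eqF.
by split; [split|rewrite u0' /= (le_trans u1)].
Qed.

Lemma piece2 (R : realType) (t : R) (t0 : 0 <= t) (t1 : t < 1) (C : set R) : measurable C ->
  (@lebesgue_measure R) ((`]t, +oo[ `&` (fun u => (u - t) / (1 - t)) @^-1` C) `&` `[0%R, 1%R]) =
  ((1 - t)%:E * (@lebesgue_measure R) (C `&` `[0%R, 1%R]))%E.
Proof.
move=> mC; have t1' : 0 < 1 - t by rewrite subr_gt0.
rewrite -leb_oc01 // -(@leb_affine R t (1 - t) t1') //; last exact: measurableI.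
congr (lebesgue_measure _); apply/seteqP; split => u /=; rewrite !in_itv /= ?andbT.
  move=> [[ut Cu] /andP[u0 u1]]; split => //.
  by rewrite divr_gt0 ?subr_gt0 //= ler_pdivrMr // mul1r lerD2r.
move=> [Cu /andP[u0 u1]].
rewrite ler_pdivrMr // mul1r lerBlDr subrK in u1.
have ut : t < u by have := mulr_gt0 u0 t1'; rewrite divfK ?gt_eqF // subr_gt0.
by split; [split|rewrite u1 andbT; apply: (le_trans t0); exact: ltW].
Qed.
Section meas.
Context (R : realType).

Lemma mk_cont : continuous (fun x : R => 1 / (1 + expR x)).
Proof.
have -> : (fun x : R => 1 / (1 + expR x)) = fun x => (1 + expR x)^-1.
  by apply/funext => x; rewrite div1r.
move=> x.
have h1 : {for x, continuous (fun x : R => 1 + expR x)}.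
  apply: continuousD; [exact: cvg_cst | exact: continuous_expR].
have h0 : 1 + expR x != 0 :> R by rewrite gt_eqF // ltr_wpDr // ?expR_ge0 // ltr01.
exact: (@continuousV _ _ (fun y : R => 1 + expR y) x h0 h1).
Qed.

Lemma mk_meas : measurable_fun [set: R] (fun x : R => 1 / (1 + expR x)).
Proof. exact: continuous_measurable_fun mk_cont. Qed.

Context (f g : R * R -> R) (mf : measurable_fun setT f) (mg : measurable_fun setT g).

Lemma mhp : measurable_fun [set: R * R] (fun s : R * R => Num.max s.1 0).
Proof. by apply: measurable_maxr => //; exact: measurable_fst. Qed.

Lemma meas_rate (sigma2 : R) :
  measurable_fun [set: R * R] (fun s => rate sigma2 (Num.max s.1 0) (f s) (g s)).
Proof.
rewrite /rate; apply: measurableT_comp; first exact: measurable_ln.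
apply: measurable_funD => //; apply: measurable_funM => //.
apply: measurable_funM => //; apply: measurable_funM => //; first exact: measurable_funB.
exact: mhp.
Qed.

Lemma meas_QNL (a b Ps T : R) :
  measurable_fun [set: R * R] (fun s => QNL a b Ps T (Num.max s.1 0) (f s) (g s)).
Proof.
rewrite /QNL /Psi; apply: measurable_funM => //; apply: measurable_funM => //.
apply: measurable_funB => //.
apply: (measurableT_comp mk_meas).
apply: measurableT_comp => //; apply: measurable_funM => //.
apply: measurable_funB => //; apply: measurable_funM => //; apply: measurable_funM => //.
exact: mhp.
Qed.
End meas.
Lemma rate_ge0 (R : realType) (s2 hh p rho : R) : 0 < s2 -> 0 <= hh -> 0 <= p -> rho <= 1 ->
  0 <= rate s2 hh p rho.
Proof.
move=> s0 h0 p0 r1; rewrite /rate; apply: ln_ge0.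
rewrite lerDl; apply: divr_ge0; last exact: ltW.
by apply: mulr_ge0 => //; apply: mulr_ge0 => //; rewrite subr_ge0.
Qed.

Lemma Omg_lt1 (R : realType) (a b : R) : Omg a b < 1.
Proof.
rewrite /Omg ltr_pdivrMr ?mul1r; last by rewrite ltr_wpDr // ?expR_ge0.
by rewrite ltrDl expR_gt0.
Qed.

Lemma QNL_ge0 (R : realType) (a b Ps T hh p rho : R) : 0 < a -> 0 <= Ps -> 0 <= T ->
  0 <= hh -> 0 <= p -> 0 <= rho -> 0 <= QNL a b Ps T hh p rho.
Proof.
move=> a0 Ps0 T0 h0 p0 r0; rewrite /QNL.
apply: divr_ge0; last by rewrite subr_ge0 ltW // Omg_lt1.
apply: mulr_ge0; first exact: mulr_ge0.
rewrite subr_ge0 /Psi /Omg !div1r lef_pV2 ?posrE ?ltr_wpDr ?expR_ge0 //.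
rewrite lerD2l ler_expR mulrBr opprB lerBlDr lerDl.
by apply: mulr_ge0; [exact: ltW|apply: mulr_ge0 => //; exact: mulr_ge0].
Qed.
Section splitting.
Context (d : measure_display) (Om : measurableType d) (R : realType)
  (P : probability Om R) (h U : Om -> R).
Hypothesis hmodel : fading_model P h U.
Context (t : R) (t0 : 0 < t) (t1 : t < 1).

Let mh : measurable_fun setT h. Proof. by case: hmodel => -[]. Qed.
Let mU : measurable_fun setT U. Proof. by case: hmodel => -[]. Qed.

Lemma split_int (Fx Fy : R * R -> R)
  (mFx : measurable_fun setT Fx) (mFy : measurable_fun setT Fy)
  (Fx0 : forall s, 0 <= Fx s) (Fy0 : forall s, 0 <= Fy s) :
  (\int[P]_w (if U w <= t then Fx (h w, (U w - 0) / t)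
              else Fy (h w, (U w - t) / (1 - t)))%:E =
   t%:E * \int[P]_w (Fx (fstate h U w))%:E +
   (1 - t)%:E * \int[P]_w (Fy (fstate h U w))%:E)%E.
Proof.
have t1' : 0 < 1 - t by rewrite subr_gt0.
pose D1 := U @^-1` `]-oo, t].
pose D2 := U @^-1` `]t, +oo[.
have mD1 : measurable D1 by rewrite -[D1]setTI; exact: mU.
have mD2 : measurable D2 by rewrite -[D2]setTI; exact: mU.
have DU : [set: Om] = D1 `|` D2.
  apply/seteqP; split => w //= _; rewrite /D1 /D2 /= !in_itv /= andbT.
  by case: (leP (U w) t) => ?; [left|right].
have mf1 : measurable_fun setT (fun w => Fx (h w, (U w - 0) / t)).
  apply: (measurableT_comp mFx); apply: measurable_fun_pair => //.
  by apply: measurable_funM => //; apply: measurable_funB.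
have mf2 : measurable_fun setT (fun w => Fy (h w, (U w - t) / (1 - t))).
  apply: (measurableT_comp mFy); apply: measurable_fun_pair => //.
  by apply: measurable_funM => //; apply: measurable_funB.
rewrite {1}DU ge0_integral_setU //; first last.
- apply/disj_set2P; apply/seteqP; split => w //=; rewrite /D1 /D2 /= !in_itv /= andbT => -[].
  by move=> a b; move: (lt_le_trans b a); rewrite ltxx.
- by move=> w _; case: ifP => _; rewrite lee_fin.
- apply/measurable_EFinP; rewrite -DU; apply: measurable_fun_ifT => //.
  by apply: measurable_fun_ler.
congr (_ + _)%E.
- rewrite -(@core_integral d Om R P h U hmodel `]-oo, t] _ 0 t t0 _ Fx); last 3 first.
  + exact: piece1 (ltW t1).
  + exact: mFx.
  + exact: Fx0.
  + apply: eq_integral => w; rewrite inE /D1 /= in_itv /= => ->.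
    by [].
  + exact: measurable_itv.
- rewrite -(@core_integral d Om R P h U hmodel `]t, +oo[ _ t (1 - t) t1' _ Fy); last 3 first.
  + exact: piece2 (ltW t0) t1.
  + exact: mFy.
  + exact: Fy0.
  + apply: eq_integral => w; rewrite inE /D2 /= in_itv /= andbT => tu.
    by rewrite leNgt tu.
  + exact: measurable_itv.
Qed.
End splitting.
Definition tsh {R : realType} (t : R) (f g : R * R -> R) (s : R * R) : R :=
  if s.2 <= t then f (s.1, (s.2 - 0) / t) else g (s.1, (s.2 - t) / (1 - t)).

Lemma tsh_meas (R : realType) (t : R) (f g : R * R -> R) :
  measurable_fun setT f -> measurable_fun setT g -> measurable_fun setT (tsh t f g).
Proof.
move=> mf mg; apply: measurable_fun_ifT.
- by apply: measurable_fun_ler => //; exact: measurable_snd.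
- apply: (measurableT_comp mf); apply: measurable_fun_pair => //.
  by apply: measurable_funM => //; apply: measurable_funB => //; exact: measurable_snd.
- apply: (measurableT_comp mg); apply: measurable_fun_pair => //.
  by apply: measurable_funM => //; apply: measurable_funB => //; exact: measurable_snd.
Qed.

Section gen.
Context (d : measure_display) (Om : measurableType d) (R : realType)
  (P : probability Om R) (h U : Om -> R).
Hypothesis hmodel : fading_model P h U.
Context (t : R) (t0 : 0 < t) (t1 : t < 1).

Lemma split_gen (K : R -> R -> R -> R) (Px rx Py ry : R * R -> R)
  (mKx : measurable_fun setT (fun s : R * R => K (Num.max s.1 0) (Px s) (rx s)))
  (mKy : measurable_fun setT (fun s : R * R => K (Num.max s.1 0) (Py s) (ry s)))
  (K0x : forall s : R * R, 0 <= K (Num.max s.1 0) (Px s) (rx s))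
  (K0y : forall s : R * R, 0 <= K (Num.max s.1 0) (Py s) (ry s)) :
  (\int[P]_w (K (h w) (tsh t Px Py (fstate h U w)) (tsh t rx ry (fstate h U w)))%:E =
   t%:E * \int[P]_w (K (h w) (Px (fstate h U w)) (rx (fstate h U w)))%:E +
   (1 - t)%:E * \int[P]_w (K (h w) (Py (fstate h U w)) (ry (fstate h U w)))%:E)%E.
Proof.
have hpos : forall w, Num.max (h w) 0 = h w.
  by move=> w; rewrite max_l // ltW //; case: hmodel => _ hp _ _ _; exact: hp.
have := split_int hmodel t0 t1 mKx mKy K0x K0y.
have e1 : forall G : R * R -> R -> R, 
  (\int[P]_w (G (fstate h U w) (Num.max (fstate h U w).1 0))%:E =
   \int[P]_w (G (fstate h U w) (h w))%:E)%E.
  by move=> G; apply: eq_integral => w _; rewrite /= hpos.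
rewrite (e1 (fun s m => K m (Px s) (rx s))) (e1 (fun s m => K m (Py s) (ry s))).
move=> <-; apply: eq_integral => w _; rewrite /tsh /fstate /=.
by case: ifP => _ /=; rewrite hpos.
Qed.
End gen.

Unset Implicit Arguments.

Theorem lemma4 (d : measure_display) (Om : measurableType d) (R : realType)
  (P : probability Om R) (h U : Om -> R)
  (a b Ps T sigma2 Pmax : R)
  (ha : 0 < a) (hb : 0 < b) (hPs : 0 < Ps) (hT : 0 < T) (hs : 0 < sigma2)
  (hPmax : 0 < Pmax)
  (hmodel : fading_model P h U)
  (Qx Pavgx Qy Pavgy : R)
  (Px rhox Py rhoy : R * R -> R)
  (optx : P2_optimal P h U a b Ps T sigma2 Pmax Qx Pavgx Px rhox)
  (opty : P2_optimal P h U a b Ps T sigma2 Pmax Qy Pavgy Py rhoy)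
  (theta : R) (htheta : 0 <= theta <= 1) :
  exists Pz rhoz : R * R -> R,
    [/\ policy Pz /\ policy rhoz,
        (forall x, 0 <= Pz x <= Pmax) /\ (forall x, 0 <= rhoz x <= 1),
        (Eenergy P h U a b Ps T Pz rhoz >= (theta * Qx + (1 - theta) * Qy)%:E)%E,
        (Epower P h U Pz <= (theta * Pavgx + (1 - theta) * Pavgy)%:E)%E
      & (Erate P h U sigma2 Pz rhoz >=
          theta%:E * Erate P h U sigma2 Px rhox
          + (1 - theta)%:E * Erate P h U sigma2 Py rhoy)%E].
Proof.
case: optx => -[[mPx mrx] bPx brx Ex Powx] _.
case: opty => -[[mPy mry] bPy bry Ey Powy] _.
case/andP: htheta => th0 th1.
have [->|tn0] := eqVneq theta 0.
  exists Py, rhoy; split => //.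
  - by rewrite mul0r add0r subr0 mul1r.
  - by rewrite mul0r add0r subr0 mul1r.
  - by rewrite mul0e add0e subr0 mul1e.
have [->|tn1] := eqVneq theta 1.
  exists Px, rhox; split => //.
  - by rewrite mul1r subrr mul0r addr0.
  - by rewrite mul1r subrr mul0r addr0.
  - by rewrite mul1e subrr mul0e adde0.
have t0 : 0 < theta by rewrite lt_neqAle eq_sym tn0.
have t1 : theta < 1 by rewrite lt_neqAle tn1.
have t1' : 0 <= 1 - theta by rewrite subr_ge0.
exists (tsh theta Px Py), (tsh theta rhox rhoy); split.
- by split; apply: tsh_meas.
- by split => s; rewrite /tsh; case: ifP.
- rewrite /Eenergy unlock in Ex Ey *.
  rewrite (@split_gen d Om R P h U hmodel theta t0 t1 (QNL a b Ps T)).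
  + rewrite EFinD !EFinM.
    by apply: leeD; apply: lee_wpmul2l => //; rewrite lee_fin.
  + exact: meas_QNL.
  + exact: meas_QNL.
  + move=> s; have /andP[? ?] := bPx s; have /andP[? ?] := brx s.
    apply: QNL_ge0 => //; try exact: ltW; by rewrite le_max lexx orbT.
  + move=> s; have /andP[? ?] := bPy s; have /andP[? ?] := bry s.
    apply: QNL_ge0 => //; try exact: ltW; by rewrite le_max lexx orbT.
- rewrite /Epower unlock in Powx Powy *.
  rewrite (@split_gen d Om R P h U hmodel theta t0 t1 (fun _ p _ => p) Px Px Py Py) //.
  + rewrite [X in (_ <= X)%E]EFinD !EFinM.
    by apply: leeD; apply: lee_wpmul2l => //; rewrite lee_fin.
  + by move=> s; case/andP: (bPx s).
  + by move=> s; case/andP: (bPy s).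
- rewrite /Erate unlock.
  rewrite (@split_gen d Om R P h U hmodel theta t0 t1 (fun hh p r => rate sigma2 hh p r)) //.
  + exact: meas_rate.
  + exact: meas_rate.
  + move=> s; have /andP[? ?] := bPx s; have /andP[? ?] := brx s.
    by apply: rate_ge0; rewrite // le_max lexx orbT.
  + move=> s; have /andP[? ?] := bPy s; have /andP[? ?] := bry s.
    by apply: rate_ge0; rewrite // le_max lexx orbT.
Qed.
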